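(* Let $\mathcal G_c$ be the colored union graph of a switched system $(A_k,B_k)_{k=1}^N$ and $X_s\subseteq X$. (1) If $\mathcal G_c$ contains a generalized stem that covers $X_s$, then there is a generalized cactus walking whose head is $X_s$. (2) If $\mathcal G_c$ contains a generalized bud that covers $X_s$, then there is a generalized cactus walking whose head is $X_s$, and the length of the shortest walk in it can be arbitrarily large (i.e., for every $M\in\mathbb N$ there is such a generalized cactus walking all of whose walks have length at least $M$).
   Context: Setting: subsystems $(A_k,B_k)$, $A_k\in\mathbb{R}^{n\times n}$ (or structured), $B_k$ of size $n\times m_k$, $k\in[N]=\{1,\dots,N\}$; $A_k(p,j)$, $B_l(q,j)$ denote entries. Colored union graph $\mathcal G_c$: vertices $X=\{x_1,\dots,x_n\}$ and $U=\bigcup_kU_k$, $U_k=\{u^k_1,\dots,u^k_{m_k}\}$; for each $k$ and each nonzero $A_k(j,q)$ a state edge $(x_q,x_j)$ with color index $k$ (parallel edges of different colors allowed); for each nonzero $B_k(j,q)$ an input edge $(u^k_q,x_j)$ with color index $k$. A state vertex is input-reachable if some path from a vertex of $U$ reaches it. Edges are S-disjoint if their heads are all distinct and edges having the same tail have different color indices. A cycle is a closed walk whose only repeated vertex is its start/end (self-loops allowed). A subgraph covers $X_s$ if its vertex set contains $X_s$. Generalized stem: a subgraph $(V_s,E_s)$ of $\mathcal G_c$ with exactly one input vertex in $V_s$ and no cycle, in which each state vertex of $V_s$ has exactly one ingoing edge in $E_s$, and whose edges are S-disjoint. Generalized bud: a subgraph $(V_s,E_s)$ with no input vertex and exactly one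 cycle, every state vertex of which is input-reachable in $\mathcal G_c$, each state vertex of $V_s$ having exactly one ingoing edge in $E_s$, and whose edges are S-disjoint. Multi-layer dynamic graph $\hat{\mathcal G}_{\bar l}$: layers $0,\dots,\bar l$. Layer 0: $\hat X_0=\{x^{00}_{p0}:p\in[n]\}$, $\hat U_0=\{u^{00}_{k,j0}: j\in[N],k\in[m_j]\}$, edges $(u^{00}_{k,j0},x^{00}_{q0})$ when $B_j(q,k)\ne0$. Layer $i\ge1$: $\hat X_i=\{x^{kt}_{ji}: j\in[n],k\in[N],t\in[N^{i-1}]\}$, $\hat U_i=\{u^{kt}_{j,li}: k,l\in[N],j\in[m_l],t\in[N^{i-1}]\}$, edges $(u^{kt}_{j,li},x^{kt}_{qi})$ when $B_l(q,j)\ne0$. Edges $(x^{k1}_{j1},x^{00}_{p0})$ when $A_k(p,j)\ne0$; for $i\ge 2$, edges $(x^{kt}_{ji},x^{k't'}_{p,i-1})$ when $A_k(p,j)\ne0$, for $k,k'\in[N]$, $t'\in[N^{i-2}]$, $t=(k'-1)N^{i-2}+t'$. An input-state walk is a walk in $\mathcal G_c$ from a vertex of $U$ to a vertex of $X$. For such a walk $p$ of length $k$ with edge colors $i_1,\dots,i_k$ passing through $u^{i_1}_{j_1},x_{j_2},\dots,x_{j_{k+1}}$, its MDG-path $\hat p$ is the unique path in $\hat{\mathcal G}_{\bar l}$ ($\bar l\ge k$) of the form $(u^{i_2,\bullet}_{j_1,i_1,k-1},x^{i_2,\bullet}_{j_2,k-1},x^{i_3,\bullet}_{j_3,k-2},\dots,x^{i_k,1}_{j_k,1},x^{00}_{j_{k+1},0})$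 with copy indices $\bullet$ forced by the edge structure (for $k=1$: $(u^{00}_{j_1,i_10},x^{00}_{j_2,0})$). A collection of input-state walks $\{p_1,\dots,p_k\}$ is a generalized cactus walking if their MDG-paths $\hat p_1,\dots,\hat p_k$ are pairwise vertex-disjoint in $\hat{\mathcal G}_{\bar l}$ with $\bar l\ge\max_i|p_i|$; its head is the set of heads of its walks. *)

(* Defs.v *)
From HB Require Import structures.
From mathcomp Require Import all_boot all_order all_algebra.
From Stdlib Require List.
Set Implicit Arguments. Unset Strict Implicit. Unset Printing Implicit Defensive.
Import GRing.Theory.
Local Open Scope ring_scope.

(* Switched system: subsystems k : 'I_N (paper's k = 1..N), states 'I_n,
   A k : 'M_n, B k : 'M_(n, m k).  Only the zero pattern matters. *)
Section ColoredUnionGraph.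
Variables (R : nzRingType) (n N : nat) (m : 'I_N -> nat).
Variables (A : 'I_N -> 'M[R]_n) (B : forall k : 'I_N, 'M[R]_(n, m k)).

(* Vertices of G_c: state x_j, or input u^k_q (input q of subsystem k). *)
Inductive vertex := VX of 'I_n | VU (k : 'I_N) of 'I_(m k).

(* Candidate edges of G_c, carrying their color index k:
   SE k q j = state edge (x_q, x_j) of color k;
   IE k q j = input edge (u^k_q, x_j) of color k. *)
Inductive cedge := SE of 'I_N & 'I_n & 'I_n | IE (k : 'I_N) of 'I_(m k) & 'I_n.

Definition etail (e : cedge) : vertex :=
  match e with SE _ q _ => VX q | IE k q _ => VU q end.
Definition ehead (e : cedge) : 'I_n :=
  match e with SE _ _ j => j | IE _ _ j => j end.
Definition ecolor (e : cedge) : 'I_N :=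
  match e with SE k _ _ => k | IE k _ _ => k end.

Definition is_edge (e : cedge) : Prop :=
  match e with
  | SE k q j => A k j q != 0
  | IE k q j => B k j q != 0
  end.

Definition subgraph (Vs : vertex -> Prop) (Es : cedge -> Prop) : Prop :=
  forall e, Es e -> [/\ is_edge e, Vs (etail e) & Vs (VX (ehead e))].

Definition S_disjoint (Es : cedge -> Prop) : Prop :=
  forall e e', Es e -> Es e' -> e <> e' ->
    ehead e <> ehead e' /\ (etail e = etail e' -> ecolor e <> ecolor e').

Definition one_ingoing (Vs : vertex -> Prop) (Es : cedge -> Prop) : Prop :=
  forall x, Vs (VX x) -> exists! e, Es e /\ ehead e = x.

Definition is_cycle (Es : cedge -> Prop) (c : seq cedge) : Prop :=
  match c with
  | [::] => False
  | e0 :: _ =>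
      [/\ forall e, List.In e c -> Es e,
          forall i, (i < size c)%N ->
            VX (ehead (nth e0 c i)) = etail (nth e0 c (i.+1 %% size c)) &
          List.NoDup (map etail c)]
  end.

(* Walk u^l_q -> x_{first} -> x_{j3} -> ... ; the first edge is the input edge
   of color l, each step (c, y) is a state edge of color c to x_y. *)
Record iswalk := ISWalk {
  w_sub : 'I_N; w_inp : 'I_(m w_sub); w_first : 'I_n;
  w_steps : seq ('I_N * 'I_n) }.

Fixpoint state_chain (x : 'I_n) (s : seq ('I_N * 'I_n)) : Prop :=
  match s with
  | [::] => True
  | (c, y) :: s' => A c y x != 0 /\ state_chain y s'
  end.

Definition valid_walk (p : iswalk) : Prop :=
  B (w_sub p) (w_first p) (w_inp p) != 0 /\ state_chain (w_first p) (w_steps p).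

Definition wlength (p : iswalk) : nat := (size (w_steps p)).+1.
Definition whead (p : iswalk) : 'I_n := last (w_first p) (map snd (w_steps p)).

Definition input_reachable (x : 'I_n) : Prop :=
  exists p, valid_walk p /\ whead p = x.

Definition gen_stem (Vs : vertex -> Prop) (Es : cedge -> Prop) : Prop :=
  [/\ subgraph Vs Es,
      (exists k (q : 'I_(m k)), Vs (VU q) /\
        forall k' (q' : 'I_(m k')), Vs (VU q') -> VU q' = VU q),
      (forall c, ~ is_cycle Es c),
      one_ingoing Vs Es &
      S_disjoint Es].

Definition gen_bud (Vs : vertex -> Prop) (Es : cedge -> Prop) : Prop :=
  subgraph Vs Es /\
  [/\ (forall k (q : 'I_(m k)), ~ Vs (VU q)),
      (exists c, is_cycle Es c /\
        forall c', is_cycle Es c' -> forall e, List.In e c' <-> List.In e c),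
      (forall x, Vs (VX x) -> input_reachable x),
      one_ingoing Vs Es &
      S_disjoint Es].

Definition covers (Vs : vertex -> Prop) (Xs : {set 'I_n}) : Prop :=
  forall x, x \in Xs -> Vs (VX x).

(* Encoding of the MDG vertices: the copy index (k,t) of a layer-i vertex
   (i >= 1) is encoded by the color sequence k :: s, where s (of length i-1)
   is the sequence encoded by t via t = (k'-1)N^{i-2} + t' recursively; a
   layer-0 vertex has the empty sequence.  The layer is the length.
     MX j s      ~ x^{kt}_{j,i}    (x^{00}_{j0} if s = [::])
     MU l j s    ~ u^{kt}_{j,l,i}  (input j of subsystem l; u^{00}_{j,l0}) *)
Inductive mdg_vertex := MX of 'I_n & seq 'I_N | MU (l : 'I_N) of 'I_(m l) & seq 'I_N.

(* Edges of the MDG in this encoding (layer bound lbar ignored since the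
   relevant paths live in layers <= max walk length):
   MX j (k :: s) -> MX p s  iff A_k(p,j) != 0 ;  MU l j s -> MX q s iff B_l(q,j) != 0. *)
Definition mdg_edge (v w : mdg_vertex) : Prop :=
  match v, w with
  | MX j (k :: s), MX p s' => s = s' /\ A k p j != 0
  | MU l j s, MX q s' => s = s' /\ B l q j != 0
  | _, _ => False
  end.

(* MDG-path of an input-state walk:
   (u^{i2,.}_{j1,i1,k-1}, x^{i2,.}_{j2,k-1}, ..., x^{ik,1}_{jk,1}, x^{00}_{j(k+1),0}) *)
Fixpoint mdg_states (x : 'I_n) (s : seq ('I_N * 'I_n)) : seq mdg_vertex :=
  match s with
  | [::] => [:: MX x [::]]
  | (c, y) :: s' => MX x (c :: map fst s') :: mdg_states y s'
  end.

Definition mdg_path (p : iswalk) : seq mdg_vertex :=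
  MU (w_inp p) (map fst (w_steps p)) :: mdg_states (w_first p) (w_steps p).

Definition vertex_disjoint (P Q : seq mdg_vertex) : Prop :=
  forall v, ~ (List.In v P /\ List.In v Q).

Definition gen_cactus_walking (ps : seq iswalk) : Prop :=
  (forall p, List.In p ps -> valid_walk p) /\
  forall ps1 p ps2 p' ps3, ps = ps1 ++ p :: ps2 ++ p' :: ps3 ->
    vertex_disjoint (mdg_path p) (mdg_path p').

Definition cw_head_is (ps : seq iswalk) (Xs : {set 'I_n}) : Prop :=
  forall x, x \in Xs <-> exists2 p, List.In p ps & whead p = x.

End ColoredUnionGraph.

(* Main.v *)
Require Import Defs.
From HB Require Import structures.
From mathcomp Require Import all_boot all_order all_algebra.
From Stdlib Require List.
From Stdlib Require Import Classical.
From mathcomp Require Import zify.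
Set Implicit Arguments. Unset Strict Implicit. Unset Printing Implicit Defensive.

Section Proof.
Variables (R : nzRingType) (n N : nat) (m : 'I_N -> nat).
Variables (A : 'I_N -> 'M[R]_n) (B : forall k : 'I_N, 'M[R]_(n, m k)).
Variables (Vs : vertex n m -> Prop) (Es : cedge n m -> Prop).

Fixpoint chainE (x : 'I_n) (s : seq ('I_N * 'I_n)) : Prop :=
  match s with [::] => True | (c, y) :: s' => Es (SE m c x y) /\ chainE y s' end.

Lemma chainE_cat x s1 s2 :
  chainE x (s1 ++ s2) <-> chainE x s1 /\ chainE (last x (map snd s1)) s2.
Proof.
elim: s1 x => [|[c y] s1 IH] x /=; first by tauto.
rewrite IH; tauto.
Qed.

Lemma state_chain_cat x s1 s2 :
  state_chain A x (s1 ++ s2) <-> state_chain A x s1 /\ state_chain A (last x (map snd s1)) s2.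
Proof.
elim: s1 x => [|[c y] s1 IH] x /=; first by tauto.
rewrite IH; tauto.
Qed.

Lemma chainE_state x s : subgraph A B Vs Es -> chainE x s -> state_chain A x s.
Proof.
move=> sub; elim: s x => [|[c y] s IH] x //= [E H]; split; last exact: IH.
by case: (sub _ E).
Qed.

Lemma chainE_det y s1 s2 : S_disjoint Es -> chainE y s1 -> chainE y s2 ->
  map fst s1 = map fst s2 -> s1 = s2.
Proof.
move=> Sd; elim: s1 y s2 => [|[c z] s1 IH] y [|[c' z'] s2] //= [E1 H1] [E2 H2] [Ec Em].
subst c'.
have zz : z = z'.
  case: (classic (SE m c y z = SE m c y z')) => [[]//|ne].
  have [_ H] := Sd _ _ E1 E2 ne.
  by case: (H erefl erefl).
subst z'; congr (_ :: _); exact: (IH z).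
Qed.

Lemma mdg_states_in (x : 'I_n) (st : seq ('I_N * 'I_n)) (y : 'I_n) (s : seq 'I_N) :
  List.In (MX m y s) (mdg_states m x st) ->
  exists pre suf, [/\ st = pre ++ suf, y = last x (map snd pre) & s = map fst suf].
Proof.
elim: st x => [|[c z] st IH] x /= [H|H] //.
- case: H => <- <-; by exists [::], [::].
- case: H => <- <-; by exists [::], ((c, z) :: st).
- have [pre [suf [-> -> ->]]] := IH _ H.
  by exists ((c, z) :: pre), suf.
Qed.

Lemma cat_split (T : Type) (pre suf st1 st2 : seq T) : pre ++ suf = st1 ++ st2 ->
  (exists q, st2 = q ++ suf /\ pre = st1 ++ q) \/
  (exists q, [/\ q <> [::], st1 = pre ++ q & suf = q ++ st2]).
Proof.
elim: pre st1 => [|a pre IH] [|b st1] /= E.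
- by left; exists [::].
- by right; exists (b :: st1).
- by left; exists (a :: pre).
- case: E => -> E; case: (IH _ E) => [[q [-> ->]]|[q [nq -> ->]]].
  + by left; exists q.
  + by right; exists q.
Qed.

Lemma mdg_states_cat (x : 'I_n) (st1 st2 : seq ('I_N * 'I_n)) (y : 'I_n) (s : seq 'I_N) :
  List.In (MX m y s) (mdg_states m x (st1 ++ st2)) ->
  (exists pre q, [/\ q <> [::], st1 = pre ++ q, y = last x (map snd pre) & s = map fst (q ++ st2)]) \/
  (exists q suf, [/\ st2 = q ++ suf, y = last (last x (map snd st1)) (map snd q) & s = map fst suf]).
Proof.
move=> /mdg_states_in [pre [suf [E -> ->]]].
case: (cat_split (esym E)) => [[q [-> ->]]|[q [nq -> ->]]].
- by right; exists q, suf; rewrite map_cat last_cat.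
- by left; exists pre, q.
Qed.

Fixpoint cedges (y : 'I_n) (st : seq ('I_N * 'I_n)) : seq (cedge n m) :=
  match st with [::] => [::] | (c, z) :: s => SE m c y z :: cedges z s end.

Lemma cedges_Es y st e : chainE y st -> List.In e (cedges y st) -> Es e.
Proof.
elim: st y => [|[c z] st IH] y //= [E H] [<-|I] //; exact: IH I.
Qed.

Lemma cedges_tail y st : map (@etail n N m) (cedges y st) = map (@VX n N m) (belast y (map snd st)).
Proof. by elim: st y => [|[c z] st IH] y //=; rewrite IH. Qed.

Lemma size_cedges y st : size (cedges y st) = size st.
Proof. by elim: st y => [|[c z] st IH] y //=; rewrite IH. Qed.

Lemma cedges_nth y st e0 i : i < size st ->
  ehead (nth e0 (cedges y st) i) = nth y (map snd st) i /\
  etail (nth e0 (cedges y st) i) = VX m (nth y (y :: map snd st) i).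
Proof.
elim: st y i => [|[c z] st IH] y [|i] //= lt.
have [h t] := IH z i lt; split.
- by rewrite h (set_nth_default y) ?size_map.
- rewrite t /=; congr (VX m _); apply: set_nth_default => /=.
  by rewrite size_map ltnW.
Qed.

Lemma In_mem (T : eqType) (x : T) s : List.In x s <-> x \in s.
Proof.
elim: s => [|a s IH] //=; rewrite inE IH; split.
- by case=> [->|->]; rewrite ?eqxx ?orbT.
- by case/orP => [/eqP->|->]; [left|right].
Qed.

Lemma uniq_NoDup (l : seq 'I_n) : uniq l -> List.NoDup (map (@VX n N m) l).
Proof.
elim: l => [|a l IH] /=; first by constructor.
case/andP => nal ul; constructor; last exact: IH.
case/List.in_map_iff => b [[eb] Ib]; subst b.
by move/In_mem: Ib; rewrite (negbTE nal).
Qed.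

Lemma closed_cycle y st : chainE y st -> st <> [::] -> last y (map snd st) = y ->
  uniq (belast y (map snd st)) -> is_cycle Es (cedges y st).
Proof.
move=> ch ne ly u.
have [e0 [cr E]] : exists e0 cr, cedges y st = e0 :: cr.
  by move: ne; case: (st) => [|[c z] ?] //= _; do 2 eexists.
have H1 : forall e, List.In e (cedges y st) -> Es e.
  move=> e; exact: (cedges_Es ch).
have H2 : forall i, i < size (cedges y st) -> VX m (ehead (nth e0 (cedges y st) i)) =
   etail (nth e0 (cedges y st) (i.+1 %% size (cedges y st))).
  move=> i; rewrite size_cedges => lt.
  have [-> _] := cedges_nth y e0 lt.
  case: (ltnP i.+1 (size st)) => lt2.
  + rewrite modn_small //.
    have [_ ->] := cedges_nth y e0 lt2.
    by [].
  + have ei : i.+1 = size st by apply/eqP; rewrite eqn_leq lt2 lt.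
    rewrite ei modnn.
    have lt0 : 0 < size st by rewrite -ei.
    have [_ ->] := cedges_nth y e0 lt0.
    rewrite /= -ly -nth_last size_map -ei /=.
    by rewrite (set_nth_default y) ?size_map.
have H3 : List.NoDup (map (@etail n N m) (cedges y st)).
  rewrite cedges_tail; exact: uniq_NoDup.
rewrite E in H1 H2 H3; rewrite E; by split.
Qed.

Lemma split_first (y : 'I_n) (T : seq ('I_N * 'I_n)) : y \in map snd T ->
  exists pre c' suf, T = pre ++ (c', y) :: suf /\ y \notin map snd pre.
Proof.
elim: T => [|[c z] T IH] //=; rewrite inE; case: eqP => [<- _|ne /IH].
- by exists [::], c, T.
- move=> [pre [c' [suf [-> np]]]]; exists ((c, z) :: pre), c', suf; split => //=.
  by rewrite inE negb_or np andbT; apply/eqP => e; apply: ne.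
Qed.

Lemma cycle_extract y st : chainE y st -> ~~ uniq (y :: map snd st) ->
  exists c', is_cycle Es c' /\ exists e v, [/\ List.In e c', etail e = VX m v & v \in y :: map snd st].
Proof.
elim: st y => [|[c z] st IH] y; first by [].
move=> [E ch] nu.
case U: (uniq (z :: map snd st)).
- have yin : y \in map snd ((c, z) :: st).
    by move: nu; rewrite cons_uniq U andbT negbK.
  have [pre [c' [suf [eT np]]]] := split_first (T := (c, z) :: st) yin.
  have chT : chainE y ((c, z) :: st) by split.
  rewrite eT -cat_rcons in chT.
  have [chC _] := (chainE_cat y (rcons pre (c', y)) suf).1 chT.
  have uT : uniq (map snd ((c, z) :: st)) by [].
  rewrite eT map_cat cat_uniq /= in uT.
  have cy := closed_cycle chC.
  have ne : rcons pre (c', y) <> [::] by case: (pre).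
  have ly : last y (map snd (rcons pre (c', y))) = y by rewrite map_rcons last_rcons.
  have ub : uniq (belast y (map snd (rcons pre (c', y)))).
    rewrite map_rcons belast_rcons /= np.
    by case/and3P: uT.
  exists (cedges y (rcons pre (c', y))); split; first exact: cy.
  move: (rcons pre (c', y)) ne => C; case: C => [|[c1 z1] C] // _.
  by exists (SE m c1 y z1), y; split; [left| |rewrite inE eqxx].
- have [c' [cy [e [v [I et vin]]]]] := IH z ch (negbT U).
  exists c'; split => //; exists e, v; split => //.
  by rewrite inE vin orbT.
Qed.

Lemma back_iter : subgraph A B Vs Es -> one_ingoing Vs Es -> forall x, Vs (VX m x) ->
  forall k, (exists l (q : 'I_(m l)) y st, [/\ Es (IE q y), chainE y st & last y (map snd st) = x]) \/
    (exists y st, [/\ Vs (VX m y), size st = k, chainE y st & last y (map snd st) = x]).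
Proof.
move=> sub oi x Vx; elim=> [|k [IH|[y [st [Vy sz ch ly]]]]].
- by right; exists x, [::].
- by left.
- have [e [[Ee he] _]] := oi _ Vy.
  have [_ Vt _] := sub _ Ee.
  case: e Ee he Vt => [c w y'|l q y'] /= Ee he Vt; subst y'.
  + right; exists w, ((c, y) :: st); split => //=; by rewrite sz.
  + by left; exists l, q, y, st.
Qed.

Lemma long_not_uniq (l : seq 'I_n) : n < size l -> ~~ uniq l.
Proof.
move=> lt; apply/negP => /card_uniqP u.
have := max_card (mem l); rewrite card_ord u => le.
by move: (leq_trans lt le); rewrite ltnn.
Qed.

Lemma stem_walk : gen_stem A B Vs Es -> forall x, Vs (VX m x) ->
  exists l (q : 'I_(m l)) y st, [/\ Es (IE q y), chainE y st & last y (map snd st) = x].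
Proof.
case=> sub _ nocyc oi _ x Vx.
case: (back_iter sub oi Vx n) => // [[y [st [_ sz ch _]]]].
have nu : ~~ uniq (y :: map snd st) by apply: long_not_uniq; rewrite /= size_map sz.
have [c' [cy _]] := cycle_extract ch nu.
by case: (nocyc c').
Qed.

Lemma mdg_states_MX (x : 'I_n) st (v : mdg_vertex n m) : List.In v (mdg_states m x st) -> exists y s, v = MX m y s.
Proof.
elim: st x => [|[c z] st IH] x /=; first by case=> // <-; do 2 eexists.
case=> [<-|]; [do 2 eexists; reflexivity|exact: IH].
Qed.

Definition SG (x : 'I_n) (p : iswalk n m) :=
  [/\ Es (IE (w_inp p) (w_first p)), chainE (w_first p) (w_steps p) & whead p = x].

Definition mv_seq (v : mdg_vertex n m) := match v with MX _ s => s | MU _ _ s => s end.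
Definition mv_tail (v : mdg_vertex n m) : option (vertex n m) :=
  match v with MX _ _ => None | MU _ j _ => Some (@VU n N m _ j) end.
Definition mv_col (v : mdg_vertex n m) : option 'I_N :=
  match v with MX _ _ => None | MU l _ _ => Some l end.

Lemma stem_disj x x' p p' v : S_disjoint Es -> SG x p -> SG x' p' ->
  List.In v (mdg_path p) -> List.In v (mdg_path p') -> x = x'.
Proof.
move=> Sd [E ch <-] [E' ch' <-].
case: p E ch => l q f st /= E ch; case: p' E' ch' => l' q' f' st' /= E' ch'.
rewrite /whead /=.
case=> [<-|I]; case=> [ev|I'].
- have es := f_equal mv_seq ev; have et := f_equal mv_tail ev; have ec := f_equal mv_col ev.
  simpl in es, et, ec; move/Some_inj: et => et; move/Some_inj: ec => ec.
  have ff : f = f'.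
    case: (classic (IE q f = IE q' f')) => [e|ne]; first by have := f_equal (@ehead n N m) e.
    have [_ H] := Sd _ _ E E' ne.
    by case: (H (esym et) (esym ec)).
  subst f'; by rewrite (chainE_det Sd ch ch' (esym es)).
- by have [? [? ?]] := mdg_states_MX I'.
- by have [? [? e]] := mdg_states_MX I; rewrite e in ev.
- have [y [s ev]] := mdg_states_MX I; subst v.
  have [pre [suf [e1 e2 e3]]] := mdg_states_in I.
  have [pre' [suf' [e1' e2' e3']]] := mdg_states_in I'.
  subst st st'.
  have [_ c1] := (chainE_cat f pre suf).1 ch.
  have [_ c2] := (chainE_cat f' pre' suf').1 ch'.
  rewrite -e2 in c1; rewrite -e2' in c2.
  have ss := chainE_det Sd c1 c2 (etrans (esym e3) e3'); subst suf'.
  by rewrite !map_cat !last_cat -e2 -e2'.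
Qed.

Lemma memmap (T : Type) (U : eqType) (f : T -> U) s x :
  x \in map f s <-> exists p, List.In p s /\ f p = x.
Proof.
elim: s => [|a s IH] /=; first by split=> // [[? []]].
rewrite inE; split.
- case/orP => [/eqP->|/(proj1 IH) [p [I <-]]]; [by exists a; split; [left|]|by exists p; split; [right|]].
- case=> p [[<-|I] e]; first by rewrite -e eqxx.
  by apply/orP; right; apply: (proj2 IH); exists p.
Qed.

Lemma finish (Xs : {set 'I_n}) (G : 'I_n -> iswalk n m -> Prop) (M : nat) :
  (forall x, x \in Xs -> exists p, G x p) ->
  (forall x p, G x p -> valid_walk A B p /\ whead p = x) ->
  (forall x p x' p', G x p -> G x' p' -> x <> x' -> vertex_disjoint (mdg_path p) (mdg_path p')) ->
  (forall x p, G x p -> M <= wlength p) ->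
  exists ps, [/\ gen_cactus_walking A B ps, cw_head_is ps Xs & forall p, List.In p ps -> M <= wlength p].
Proof.
move=> H1 H2 H3 H4.
have [ps [mh Hp]] : exists ps, map (@whead n N m) ps = enum Xs /\ forall p, List.In p ps -> exists x, G x p.
  have : forall x, x \in enum Xs -> exists p, G x p by move=> x; rewrite mem_enum; exact: H1.
  elim: (enum Xs) => [|x xs IH] H; first by exists [::].
  have [ps [e1 e2]] : exists ps, map (@whead n N m) ps = xs /\ forall p, List.In p ps -> exists x, G x p.
    by apply: IH => y yin; apply: H; rewrite inE yin orbT.
  have [p Gp] := H x (mem_head _ _).
  exists (p :: ps); split; first by rewrite /= e1 (H2 _ _ Gp).2.
  by move=> q [<-|I]; [exists x|exact: e2].
have U : uniq (map (@whead n N m) ps) by rewrite mh enum_uniq.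
exists ps; split.
- split.
  + by move=> p /Hp [x /H2 []].
  + move=> ps1 p ps2 p' ps3 E.
    have Ip : List.In p ps by rewrite E; apply: List.in_or_app; right; left.
    have Ip' : List.In p' ps by rewrite E; apply: List.in_or_app; right; right; apply: List.in_or_app; right; left.
    have [x Gx] := Hp _ Ip; have [x' Gx'] := Hp _ Ip'.
    apply: (H3 _ _ _ _ Gx Gx') => exx.
    move: U; rewrite E map_cat cat_uniq /= map_cat mem_cat /= inE.
    rewrite (H2 _ _ Gx).2 (H2 _ _ Gx').2 exx eqxx /=.
    by case/and4P => _ _; rewrite orbT.
- move=> x; rewrite -mem_enum -mh memmap; split.
  + by case=> p [I e]; exists p.
  + by case=> p I e; exists p.
- by move=> p /Hp [x /H4].
Qed.

Lemma In_nth_ex (T : Type) (d : T) (s : seq T) e : List.In e s -> exists k, k < size s /\ nth d s k = e.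
Proof.
elim: s => [|a s IH] //= [<-|/IH [k [lt <-]]]; first by exists 0.
by exists k.+1.
Qed.

Lemma nth_In (T : Type) (d : T) (s : seq T) k : k < size s -> List.In (nth d s k) s.
Proof.
elim: s k => [|a s IH] [|k] //= lt; [by left|right; exact: IH].
Qed.

Lemma VX_inj (a b : 'I_n) : VX m a = VX m b -> a = b.
Proof. by case. Qed.

Section Bud.
Hypotheses (sub : subgraph A B Vs Es) (oi : one_ingoing Vs Es) (Sd : S_disjoint Es).
Variables (e0 : cedge n m) (cr : seq (cedge n m)).
Hypothesis (cyc : is_cycle Es (e0 :: cr)).
Hypothesis (uniqc : forall c', is_cycle Es c' -> forall e, List.In e c' <-> List.In e (e0 :: cr)).
Hypothesis (noinp : forall k (q : 'I_(m k)), ~ Vs (@VU n N m k q)).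

Let c0 := e0 :: cr.
Let L := size c0.

Definition oncycle (y : 'I_n) := exists e, List.In e c0 /\ etail e = VX m y.

Lemma cyc_all : forall e, List.In e c0 -> Es e.
Proof. by case: cyc. Qed.

Lemma cyc_nth : forall i, i < L -> VX m (ehead (nth e0 c0 i)) = etail (nth e0 c0 (i.+1 %% L)).
Proof. by case: cyc. Qed.

Lemma L_gt0 : 0 < L.
Proof. by []. Qed.

Lemma step_back c y z : Es (SE m c y z) -> oncycle z -> oncycle y.
Proof.
move=> Ez [e [Ie te]].
have [k [lt ek]] := In_nth_ex e0 Ie.
pose k' := if k is k1.+1 then k1 else L.-1.
have lt' : k' < L by rewrite /k'; case: (k) lt => [|k1] /= lt; [exact: ltnSn|exact: ltnW].
have ek' : k'.+1 %% L = k.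
  rewrite /k'; case: (k) lt => [|k1] lt /=; first exact: modnn.
  by rewrite modn_small.
have := cyc_nth lt'; rewrite ek' ek te => /VX_inj he.
set e' := nth e0 c0 k' in he.
have Ee' : Es e' by apply: cyc_all; apply: nth_In.
have [_ _ Vz] := sub Ee'; rewrite he in Vz.
have [e1 [_ U]] := oi Vz.
have h1 := U _ (conj Ez erefl); have h2 := U _ (conj Ee' he).
exists e'; split; first by apply: nth_In.
by rewrite -h2 h1.
Qed.

Lemma back_prop y st : chainE y st -> (exists v, v \in y :: map snd st /\ oncycle v) -> oncycle y.
Proof.
elim: st y => [|[c z] st IH] y /=.
- by move=> _ [v [vin ov]]; move: vin; rewrite inE => /eqP <-.
- move=> [E ch] [v [vin ov]]; move: vin; rewrite inE; case/orP => [/eqP <-//|vin].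
  apply: (step_back E); apply: IH => //; by exists v.
Qed.

Lemma K1 y st : chainE y st -> n <= size st -> oncycle y.
Proof.
move=> ch le.
have nu : ~~ uniq (y :: map snd st) by apply: long_not_uniq; rewrite /= size_map ltnS.
have [c' [cy [e [v [I te vin]]]]] := cycle_extract ch nu.
apply: (back_prop ch); exists v; split => //.
by exists e; split => //; apply/(uniqc cy).
Qed.

Lemma K2 x : Vs (VX m x) -> exists y st, [/\ oncycle y, chainE y st, last y (map snd st) = x & size st = n].
Proof.
move=> Vx; case: (back_iter sub oi Vx n) => [[l [q [y [st [E _ _]]]]]|[y [st [Vy sz ch ly]]]].
- have [_ Vt _] := sub E; by case: (noinp Vt).
- exists y, st; split => //; apply: (K1 ch); by rewrite sz.
Qed.

Let csteps := map (fun e => (ecolor e, ehead e)) c0.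
Let rv := ehead (nth e0 c0 L.-1).

Lemma rv_tail : VX m rv = etail e0.
Proof.
have h := cyc_nth (i := size cr) (ltnSn _).
have e : (size cr).+1 %% L = 0 := modnn _.
rewrite e in h; exact: h.
Qed.

Lemma CR k : k <= L -> chainE rv (take k csteps) /\
  VX m (last rv (map snd (take k csteps))) = etail (nth e0 c0 (k %% L)).
Proof.
elim: k => [|k IH] lt.
- by rewrite take0 mod0n /= rv_tail.
- have [ch lk] := IH (ltnW lt).
  have ltc : k < size csteps by rewrite size_map.
  rewrite (take_nth (ecolor e0, rv) ltc) -cats1 chainE_cat map_cat last_cat /=.
  rewrite (nth_map e0) //.
  set ek := nth e0 c0 k.
  have Eek : Es ek by apply: cyc_all; apply: nth_In.
  rewrite modn_small // in lk.
  split; last exact: cyc_nth.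
  split => //; split => //.
  move: Eek lk; rewrite -/ek; case: ek => [c a b|l q b] //= Eek.
  by move/VX_inj ->.
Qed.

Lemma cyc_split a : oncycle a -> exists s1 s2, [/\ chainE rv s1, last rv (map snd s1) = a,
  chainE a s2, last a (map snd s2) = rv & size s1 + size s2 = L].
Proof.
move=> [e [Ie te]].
have [j [lt ej]] := In_nth_ex e0 Ie.
have [chj lj] := CR (ltnW lt).
rewrite modn_small // ej te in lj; move/VX_inj: lj => lj.
have [chL lL] := CR (leqnn L).
have {}lL : last rv (map snd (take L csteps)) = rv.
  by apply: VX_inj; rewrite lL modnn rv_tail.
have sc : size csteps = L by rewrite size_map.
rewrite -sc take_size in chL lL.
rewrite -(cat_take_drop j csteps) in chL lL.
have [_ ch2] := (chainE_cat _ _ _).1 chL.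
rewrite lj in ch2.
exists (take j csteps), (drop j csteps); split => //.
- by rewrite map_cat last_cat lj in lL.
- by rewrite size_take size_drop sc lt subnKC // ltnW.
Qed.

Lemma cyc_loop a : oncycle a -> exists lp, [/\ chainE a lp, last a (map snd lp) = a & size lp = L].
Proof.
move=> /cyc_split [s1 [s2 [c1 l1 c2 l2 sz]]].
exists (s2 ++ s1); split.
- by apply/chainE_cat; rewrite l2.
- by rewrite map_cat last_cat l2.
- by rewrite size_cat addnC.
Qed.

Lemma cyc_reach a b : oncycle a -> oncycle b ->
  exists st, [/\ chainE a st, last a (map snd st) = b & size st <= 2 * L].
Proof.
move=> /cyc_split [s1 [s2 [c1 l1 c2 l2 sz]]] /cyc_split [t1 [t2 [d1 m1 d2 m2 sz']]].
exists (s2 ++ t1); split.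
- by apply/chainE_cat; rewrite l2.
- by rewrite map_cat last_cat l2.
- rewrite size_cat mul2n -addnn; apply: leq_add.
  + by rewrite -sz leq_addl.
  + by rewrite -sz' leq_addr.
Qed.

Lemma rv_oncycle : oncycle rv.
Proof. by exists e0; split; [left|rewrite rv_tail]. Qed.

Hypothesis (reach : forall x, Vs (VX m x) -> input_reachable A B x).

Lemma min_ex (P : nat -> Prop) : (exists k, P k) -> exists k, P k /\ forall j, j < k -> ~ P j.
Proof.
move=> [k Pk]; elim/ltn_ind: k Pk => k IH Pk.
case: (classic (exists j, j < k /\ P j)) => [[j [lt Pj]]|nj]; first exact: IH j lt Pj.
by exists k; split => // j lt Pj; apply: nj; exists j.
Qed.

Lemma sepfact a b L' D E : 0 < L' -> a < b -> L' * (D * a + E) + D <= L' * (D * b + E).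
Proof.
move=> h1 h2.
have h3 : D * a + E + D <= D * b + E by rewrite addnAC -mulnSr leq_add2r leq_mul2l h2 orbT.
apply: (leq_trans _ (leq_mul (leqnn L') h3)); rewrite [in X in _ <= X]mulnDr leq_add2l.
exact: leq_pmull.
Qed.

Lemma bud_main (Xs : {set 'I_n}) (M : nat) : covers Vs Xs ->
  exists ps, [/\ gen_cactus_walking A B ps, cw_head_is ps Xs & forall p, List.In p ps -> M <= wlength p].
Proof.
move=> cov.
have Vrv : Vs (VX m rv).
  have [_ V _] := sub (cyc_all (or_introl erefl)); by rewrite -rv_tail in V.
have ex0 : exists k, exists p, [/\ valid_walk A B p, oncycle (whead p) & size (w_steps p) = k].
  have [p [v h]] := reach Vrv; exists (size (w_steps p)), p; split => //; rewrite h; exact: rv_oncycle.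
have [k0 [[p0 [v0 on0 sz0]] mn]] := min_ex ex0.
case: p0 v0 on0 sz0 mn => lP qP fP stP v0 on0 sz0 mn.
rewrite /whead /= in on0.
set r' := last fP (map snd stP) in on0.
have offc : forall pre q, q <> [::] -> stP = pre ++ q -> ~ oncycle (last fP (map snd pre)).
  move=> pre q nq e onc; apply: (mn (size pre)).
  - rewrite -sz0 /= e size_cat -{1}(addn0 (size pre)) ltn_add2l lt0n size_eq0.
    by apply/eqP.
  - exists (ISWalk qP fP pre); split => //.
    case: v0 => vb vs; split => //; move: vs; rewrite /= e.
    by case/state_chain_cat.
have [lp [clp llp slp]] := cyc_loop on0.
pose loopn j := iter j (cat lp) [::].
have Hloop : forall j, [/\ chainE r' (loopn j), last r' (map snd (loopn j)) = r' & size (loopn j) = j * L].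
  elim=> [|j [c l sz]]; first by [].
  rewrite /loopn iterS -/(loopn j); split.
  - by apply/chainE_cat; rewrite llp.
  - by rewrite map_cat last_cat llp.
  - by rewrite size_cat slp sz mulSn.
have [Bd eBd] : exists Bd, Bd = 2 * L + n + 1 by eexists.
have [D eD] : exists D, D = Bd + size stP + 1 by eexists.
have [E eE] : exists E, E = n + M + 1 by eexists.
have Lp : 0 < L by [].
pose G x p := exists Q, [/\ p = ISWalk qP fP (stP ++ Q), chainE r' Q, last r' (map snd Q) = x &
   exists d, d < Bd /\ size Q = L * (D * x + E) + d].
have bigQ : forall (x : nat) (Q : seq ('I_N * 'I_n)) (d : nat), size Q = L * (D * x + E) + d -> E <= size Q.
  move=> x Q d e; rewrite e; have := leq_pmull (D * x + E) Lp; lia.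
apply: (finish (G := G)).
- move=> x xin.
  have [y [st [ony chy ly szy]]] := K2 (cov x xin).
  have [sr [csr lsr ssr]] := cyc_reach on0 ony.
  have [cl ll sl] := Hloop (D * x + E).
  exists (ISWalk qP fP (stP ++ (loopn (D * x + E) ++ sr ++ st))), (loopn (D * x + E) ++ sr ++ st).
  split => //.
  + apply/chainE_cat; rewrite ll; split => //; apply/chainE_cat; by rewrite lsr.
  + by rewrite !map_cat !last_cat ll lsr ly.
  + exists (size sr + size st); split; first lia.
    by rewrite !size_cat sl mulnC addnA.
- move=> x p [Q [-> cQ lQ _]]; split.
  + case: v0 => vb vs; split => //=.
    apply/state_chain_cat; split => //; exact: chainE_state cQ.
  + by rewrite /whead /= map_cat last_cat -/r' lQ.
- move=> x p x' p' [Q [-> cQ lQ [d [dB sQ]]]] [Q' [-> cQ' lQ' [d' [dB' sQ']]]] nx v [I I'].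
  have sep : size Q + size stP < size Q' \/ size Q' + size stP < size Q.
    case: (ltngtP x x') => h.
    + left; have := sepfact D E Lp h; lia.
    + right; have := sepfact D E Lp h; lia.
    + by case: nx; apply: val_inj.
  have nQ : n <= size Q by have := bigQ _ _ _ sQ; lia.
  have nQ' : n <= size Q' by have := bigQ _ _ _ sQ'; lia.
  have LR : forall Q1 Q2 pre q q1 suf y s, q <> [::] -> stP = pre ++ q -> y = last fP (map snd pre) ->
      s = map fst (q ++ Q1) -> Q2 = q1 ++ suf -> y = last r' (map snd q1) -> s = map fst suf ->
      n <= size Q1 -> chainE r' Q2 -> False.
    move=> Q1 Q2 pre q q1 suf y s nq e1 e2 e3 e4 e5 e6 n1 c2.
    subst Q2; have [_ c3] := (chainE_cat _ _ _).1 c2; rewrite -e5 in c3.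
    apply: (offc pre q nq e1); rewrite -e2; apply: (K1 c3).
    have := f_equal size (etrans (esym e6) e3); rewrite !size_map size_cat => ->.
    by rewrite (leq_trans n1) // leq_addl.
  move: I I' => /= [ev|I] [ev'|I'].
  + have := f_equal size (f_equal mv_seq (etrans ev (esym ev'))); rewrite /= !size_map !size_cat; lia.
  + by have [? [? e]] := mdg_states_MX I'; rewrite e in ev.
  + by have [? [? e]] := mdg_states_MX I; rewrite e in ev'.
  + have [y [s ev]] := mdg_states_MX I; subst v.
    case: (mdg_states_cat I) => [[pre [q [nq e1 e2 e3]]]|[q1 [suf [e1 e2 e3]]]];
    case: (mdg_states_cat I') => [[pre' [q' [nq' e1' e2' e3']]]|[q1' [suf' [e1' e2' e3']]]].
    * have := f_equal size (etrans (esym e3) e3'); rewrite !size_map !size_cat.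
      have := f_equal size e1; have := f_equal size e1'; rewrite !size_cat.
      have h1 : 0 < size q by move: nq; case: (q).
      have h2 : 0 < size q' by move: nq'; case: (q').
      lia.
    * exact: (LR Q Q' pre q q1' suf' y s).
    * exact: (LR Q' Q pre' q' q1 suf y s).
    * subst Q Q'.
      have [_ c1] := (chainE_cat _ _ _).1 cQ; have [_ c2] := (chainE_cat _ _ _).1 cQ'.
      rewrite -/r' -e2 in c1; rewrite -/r' -e2' in c2.
      have ss := chainE_det Sd c1 c2 (etrans (esym e3) e3'); subst suf'.
      apply: nx; rewrite -lQ -lQ' !map_cat !last_cat.
      by rewrite -/r' -e2 -e2'.
- move=> x p [Q [-> _ _ [d [_ sQ]]]]; rewrite /wlength /= size_cat.
  have := bigQ _ _ _ sQ; lia.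
Qed.

End Bud.

End Proof.

Theorem proposition2 (R : nzRingType) (n N : nat) (m : 'I_N -> nat)
    (A : 'I_N -> 'M[R]_n) (B : forall k : 'I_N, 'M[R]_(n, m k))
    (Xs : {set 'I_n}) :
  ((exists (Vs : vertex n m -> Prop) (Es : cedge n m -> Prop),
       gen_stem A B Vs Es /\ covers Vs Xs) ->
     exists ps : seq (iswalk n m),
       gen_cactus_walking A B ps /\ cw_head_is ps Xs)
  /\
  ((exists (Vs : vertex n m -> Prop) (Es : cedge n m -> Prop),
       gen_bud A B Vs Es /\ covers Vs Xs) ->
     (exists ps : seq (iswalk n m),
        gen_cactus_walking A B ps /\ cw_head_is ps Xs) /\
     forall M : nat, exists ps : seq (iswalk n m),
       [/\ gen_cactus_walking A B ps, cw_head_is ps Xs &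
           forall p, List.In p ps -> (M <= wlength p)%N]).
Proof.
split.
- move=> [Vs [Es [st cov]]].
  have st' := st; case: st' => sub _ _ oi Sd.
  suff [ps [h1 h2 _]] : exists ps, [/\ gen_cactus_walking A B ps, cw_head_is ps Xs &
      forall p, List.In p ps -> 0 <= wlength p] by exists ps.
  apply: (@finish R n N m A B Xs (SG Es) 0).
  + move=> x xin.
    have [l [q [y [s [E ch ly]]]]] := stem_walk st (cov x xin).
    by exists (ISWalk q y s); split.
  + move=> x p [E ch <-]; split => //; split.
    * by have [] := sub _ E.
    * exact: (chainE_state sub ch).
  + move=> x p x' p' G G' nx v [I I']; apply: nx; exact: (stem_disj A Sd G G' I I').
  + by [].
- move=> [Vs [Es [[sub [noinp [c [cy uc]] reach oi Sd]] cov]]].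
  case: c cy uc => [|e0 cr] cy uc; first by [].
  have bm := fun M => bud_main sub oi Sd cy uc noinp reach M cov.
  split; last exact: bm.
  by have [ps [h1 h2 _]] := bm 0; exists ps.
Qed.
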